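(* Let $A=(A,\oplus,\odot)$ be a skew brace, $B$ a characteristic subgroup of $A_{\oplus}$, and $W$ a set of group words. For $x\in A$ denote by $\overline{x}$ the image of $x$ under the natural homomorphism $A_{\oplus}\to A_{\oplus}/B$. If $W(\mathrm{Aut}(A_{\oplus}/B))=1$, then for all $a,b\in W(A_{\odot})$ the equalities $\overline{a\odot b}=\overline{a\oplus b}$ and $\overline{a^{-1}}=\overline{\ominus a}$ hold.
   Context: A skew brace is a set $A$ with two binary operations $\oplus,\odot$ such that $A_{\oplus}=(A,\oplus)$ and $A_{\odot}=(A,\odot)$ are groups and $a\odot(b\oplus c)=(a\odot b)\ominus a\oplus(a\odot c)$ for all $a,b,c\in A$. Here $\ominus a$ is the inverse of $a$ in $A_{\oplus}$ and $a^{-1}$ is the inverse of $a$ in $A_{\odot}$. A group word is an element $w(x_1,\dots,x_n)$ of a free group on $x_1,\dots,x_n$; for a group $G$, $w(G)$ is the subgroup generated by all values $w(g_1,\dots,g_n)$, $g_i\in G$, and for a set $W$ of group words $W(G)$ is the subgroup generated by all $w(G)$, $w\in W$ (the verbal subgroup). *)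

(* Defs.v *)
Record is_group (T : Type) (op : T -> T -> T) (iv : T -> T) (e : T) : Prop := {
  grp_assoc : forall x y z, op x (op y z) = op (op x y) z;
  grp_idl : forall x, op e x = x;
  grp_idr : forall x, op x e = x;
  grp_invl : forall x, op (iv x) x = e;
  grp_invr : forall x, op x (iv x) = e
}.

Record group := Group {
  gcar :> Type;
  gmul : gcar -> gcar -> gcar;
  ginv : gcar -> gcar;
  gone : gcar;
  g_axioms : @is_group gcar gmul ginv gone
}.

Record skew_brace := SkewBrace {
  sb_car :> Type;
  sb_add : sb_car -> sb_car -> sb_car;
  sb_neg : sb_car -> sb_car;
  sb_zero : sb_car;
  sb_mul : sb_car -> sb_car -> sb_car;
  sb_inv : sb_car -> sb_car;
  sb_one : sb_car;
  sb_add_group : @is_group sb_car sb_add sb_neg sb_zero;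
  sb_mul_group : @is_group sb_car sb_mul sb_inv sb_one;
  sb_compat : forall a b c,
    sb_mul a (sb_add b c) = sb_add (sb_add (sb_mul a b) (sb_neg a)) (sb_mul a c)
}.

(** Group words: terms over variables x_0, x_1, ... (a word involves only
    finitely many variables); evaluation respects free-group equality. *)
Inductive word : Type :=
| WVar : nat -> word
| WOne : word
| WMul : word -> word -> word
| WInv : word -> word.

Fixpoint weval {T : Type} (op : T -> T -> T) (iv : T -> T) (e : T)
    (g : nat -> T) (w : word) : T :=
  match w with
  | WVar n => g n
  | WOne => e
  | WMul u v => op (weval op iv e g u) (weval op iv e g v)
  | WInv u => iv (weval op iv e g u)
  end.

(** Membership in the verbal subgroup W(G): the subgroup generated by all
    values w(g_1, g_2, ...), w ∈ W, with all g_i in the group G (the group G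
    is given as the elements of T satisfying D, with operations op, iv, e). *)
Inductive in_verbal {T : Type} (op : T -> T -> T) (iv : T -> T) (e : T)
    (D : T -> Prop) (W : word -> Prop) : T -> Prop :=
| iv_value : forall w g, W w -> (forall n, D (g n)) ->
    in_verbal op iv e D W (weval op iv e g w)
| iv_one : in_verbal op iv e D W e
| iv_mul : forall x y, in_verbal op iv e D W x -> in_verbal op iv e D W y ->
    in_verbal op iv e D W (op x y)
| iv_inv : forall x, in_verbal op iv e D W x -> in_verbal op iv e D W (iv x).

Definition is_hom {T U : Type} (opT : T -> T -> T) (opU : U -> U -> U)
    (f : T -> U) : Prop :=
  forall x y, f (opT x y) = opU (f x) (f y).

Definition is_aut_pair {T : Type} (op : T -> T -> T) (p : (T -> T) * (T -> T))
    : Prop :=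
  is_hom op op (fst p) /\ (forall x, snd p (fst p x) = x)
                       /\ (forall x, fst p (snd p x) = x).

(** Aut(Q), with each automorphism f represented by the pair (f, f^{-1});
    product is composition, inverse swaps the pair. *)
Definition aut_mul {T : Type} (p q : (T -> T) * (T -> T)) : (T -> T) * (T -> T) :=
  (fun x => fst p (fst q x), fun x => snd q (snd p x)).
Definition aut_inv {T : Type} (p : (T -> T) * (T -> T)) : (T -> T) * (T -> T) :=
  (snd p, fst p).
Definition aut_one {T : Type} : (T -> T) * (T -> T) := (fun x => x, fun x => x).

Definition verbal_aut_trivial (Q : group) (W : word -> Prop) : Prop :=
  forall p, in_verbal aut_mul aut_inv aut_one (is_aut_pair (@gmul Q)) W p ->
    forall x, fst p x = x.

Definition is_subgroup {T : Type} (op : T -> T -> T) (iv : T -> T) (e : T)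
    (B : T -> Prop) : Prop :=
  B e /\ (forall x y, B x -> B y -> B (op x y)) /\ (forall x, B x -> B (iv x)).

Definition characteristic_add_subgroup (A : skew_brace) (B : A -> Prop) : Prop :=
  is_subgroup (@sb_add A) (@sb_neg A) (@sb_zero A) B /\
  forall p : (A -> A) * (A -> A), is_aut_pair (@sb_add A) p ->
    forall x, B x -> B (fst p x).

(** pi : A_⊕ -> Q is (a presentation of) the natural homomorphism
    A_⊕ -> A_⊕ / B: a surjective homomorphism with kernel exactly B. *)
Definition natural_quotient (A : skew_brace) (B : A -> Prop) (Q : group)
    (pi : A -> Q) : Prop :=
  is_hom (@sb_add A) (@gmul Q) pi /\
  (forall q : Q, exists x, pi x = q) /\
  (forall x, pi x = gone Q <-> B x).

(* Main.v *)
Require Import Defs.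
From Stdlib Require Import ClassicalEpsilon FunctionalExtensionality.

Section G.
Lemma g_cancel_l {T} (op : T -> T -> T) (iv : T -> T) (e:T) (G : is_group _ op iv e) x y z :
  op x y = op x z -> y = z.
Proof.
  intro H. rewrite <- (grp_idl _ _ _ _ G y), <- (grp_idl _ _ _ _ G z).
  rewrite <- (grp_invl _ _ _ _ G x), <- !(grp_assoc _ _ _ _ G), H. reflexivity.
Qed.
Lemma g_inv_unique {T} (op : T -> T -> T) (iv : T -> T) (e:T) (G : is_group _ op iv e) x y :
  op x y = e -> y = iv x.
Proof.
  intro H. apply (g_cancel_l _ _ _ G x). rewrite H, (grp_invr _ _ _ _ G). reflexivity.
Qed.
Lemma g_inv_inv {T} (op : T -> T -> T) (iv : T -> T) (e:T) (G : is_group _ op iv e) x : iv (iv x) = x.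
Proof. symmetry. apply (g_inv_unique _ _ _ G). apply (grp_invl _ _ _ _ G). Qed.
Lemma g_inv_e {T} (op : T -> T -> T) (iv : T -> T) (e:T) (G : is_group _ op iv e) : iv e = e.
Proof. symmetry. apply (g_inv_unique _ _ _ G). apply (grp_idl _ _ _ _ G). Qed.
Lemma g_inv_op {T} (op : T -> T -> T) (iv : T -> T) (e:T) (G : is_group _ op iv e) x y :
  iv (op x y) = op (iv y) (iv x).
Proof.
  symmetry. apply (g_inv_unique _ _ _ G).
  rewrite <- (grp_assoc _ _ _ _ G), (grp_assoc _ _ _ _ G y), (grp_invr _ _ _ _ G),
    (grp_idl _ _ _ _ G), (grp_invr _ _ _ _ G). reflexivity.
Qed.
Lemma g_eq_of {T} (op : T -> T -> T) (iv : T -> T) (e:T) (G : is_group _ op iv e) x y :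
  op (iv x) y = e -> x = y.
Proof.
  intro H. apply (g_inv_unique _ _ _ G) in H. rewrite (g_inv_inv _ _ _ G) in H. auto.
Qed.
Lemma hom_e {T U} (opT : T -> T -> T) (ivT : T -> T) (eT:T) (opU : U -> U -> U) (ivU : U -> U) (eU:U) (GT : is_group _ opT ivT eT)
  (GU : is_group _ opU ivU eU) f : is_hom opT opU f -> f eT = eU.
Proof.
  intro H. apply (g_cancel_l _ _ _ GU (f eT)). rewrite <- H, (grp_idl _ _ _ _ GT),
    (grp_idr _ _ _ _ GU). reflexivity.
Qed.
Lemma hom_inv {T U} (opT : T -> T -> T) (ivT : T -> T) (eT:T) (opU : U -> U -> U) (ivU : U -> U) (eU:U) (GT : is_group _ opT ivT eT)
  (GU : is_group _ opU ivU eU) f : is_hom opT opU f -> forall x, f (ivT x) = ivU (f x).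
Proof.
  intros H x. apply (g_inv_unique _ _ _ GU). rewrite <- H, (grp_invr _ _ _ _ GT).
  apply (hom_e _ _ _ _ _ _ GT GU f H).
Qed.
End G.

Definition lam (A : skew_brace) (a x : A) : A := sb_add A (sb_neg A a) (sb_mul A a x).

Lemma one_zero (A : skew_brace) : sb_one A = sb_zero A.
Proof.
  pose proof (sb_add_group A) as GA. pose proof (sb_mul_group A) as GM.
  pose proof (sb_compat A (sb_one A) (sb_zero A) (sb_zero A)) as H.
  rewrite (grp_idl _ _ _ _ GA), !(grp_idl _ _ _ _ GM), (grp_idr _ _ _ _ GA) in H.
  assert (H2 : sb_add A (sb_zero A) (sb_neg A (sb_one A)) = sb_zero A) by auto.
  rewrite (grp_idl _ _ _ _ GA) in H2.
  rewrite <- (g_inv_inv _ _ _ GA (sb_one A)), H2. apply (g_inv_e _ _ _ GA).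
Qed.

Lemma lam_hom (A : skew_brace) a : is_hom (sb_add A) (sb_add A) (lam A a).
Proof.
  pose proof (sb_add_group A) as GA. intros x y. unfold lam.
  rewrite sb_compat, !(grp_assoc _ _ _ _ GA). reflexivity.
Qed.

Lemma lam_comp (A : skew_brace) a b x : lam A a (lam A b x) = lam A (sb_mul A a b) x.
Proof.
  pose proof (sb_add_group A) as GA. pose proof (sb_mul_group A) as GM.
  change (lam A b x) with (sb_add A (sb_neg A b) (sb_mul A b x)).
  rewrite (lam_hom A a).
  rewrite (hom_inv _ _ _ _ _ _ GA GA _ (lam_hom A a)).
  unfold lam. rewrite (g_inv_op _ _ _ GA), (g_inv_inv _ _ _ GA), (grp_assoc _ _ _ _ GM).
  rewrite !(grp_assoc _ _ _ _ GA). f_equal.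
  rewrite <- (grp_assoc _ _ _ _ GA _ a), (grp_invr _ _ _ _ GA), (grp_idr _ _ _ _ GA).
  reflexivity.
Qed.

Lemma lam_one (A : skew_brace) x : lam A (sb_one A) x = x.
Proof.
  pose proof (sb_add_group A) as GA. pose proof (sb_mul_group A) as GM.
  unfold lam. rewrite (grp_idl _ _ _ _ GM), one_zero, (g_inv_e _ _ _ GA), (grp_idl _ _ _ _ GA).
  reflexivity.
Qed.

Lemma lam_aut (A : skew_brace) a :
  is_aut_pair (sb_add A) (lam A a, lam A (sb_inv A a)).
Proof.
  pose proof (sb_mul_group A) as GM.
  split; [apply lam_hom|]. simpl. split; intro x; rewrite lam_comp.
  - rewrite (grp_invl _ _ _ _ GM). apply lam_one.
  - rewrite (grp_invr _ _ _ _ GM). apply lam_one.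
Qed.

Lemma mul_as_add (A : skew_brace) a b : sb_mul A a b = sb_add A a (lam A a b).
Proof.
  pose proof (sb_add_group A) as GA. unfold lam.
  rewrite (grp_assoc _ _ _ _ GA), (grp_invr _ _ _ _ GA), (grp_idl _ _ _ _ GA). reflexivity.
Qed.

Theorem proposition3p1 (A : skew_brace) (B : A -> Prop)
  (HB : characteristic_add_subgroup A B) (W : word -> Prop)
  (Q : group) (pi : A -> Q) (Hpi : natural_quotient A B Q pi) :
  verbal_aut_trivial Q W ->
  forall a b : A,
    in_verbal (@sb_mul A) (@sb_inv A) (@sb_one A) (fun _ => True) W a ->
    in_verbal (@sb_mul A) (@sb_inv A) (@sb_one A) (fun _ => True) W b ->
    pi (sb_mul A a b) = pi (sb_add A a b) /\ pi (sb_inv A a) = pi (sb_neg A a).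
Proof.
  intros Htriv a b Ha Hb.
  destruct Hpi as [Hhom [Hsurj Hker]]. destruct HB as [[HB0 [HBadd HBneg]] HBchar].
  pose proof (sb_add_group A) as GA. pose proof (sb_mul_group A) as GM.
  pose proof (g_axioms Q) as GQ.
  assert (pi_lam : forall c x y, pi x = pi y -> pi (lam A c x) = pi (lam A c y)).
  { intros c x y H.
    assert (HB1 : B (sb_add A (sb_neg A x) y)).
    { apply Hker. rewrite Hhom, (hom_inv _ _ _ _ _ _ GA GQ _ Hhom), H.
      apply (grp_invl _ _ _ _ GQ). }
    apply (HBchar _ (lam_aut A c)) in HB1. simpl in HB1.
    rewrite (lam_hom A c), (hom_inv _ _ _ _ _ _ GA GA _ (lam_hom A c)) in HB1.
    apply Hker in HB1. rewrite Hhom, (hom_inv _ _ _ _ _ _ GA GQ _ Hhom) in HB1.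
    apply (g_eq_of _ _ _ GQ). exact HB1. }
  pose (s := fun q => proj1_sig (constructive_indefinite_description _ (Hsurj q))).
  assert (Hs : forall q, pi (s q) = q).
  { intro q. unfold s. exact (proj2_sig (constructive_indefinite_description _ (Hsurj q))). }
  pose (Lbar := fun c q => pi (lam A c (s q))).
  assert (LbarE : forall c x, Lbar c (pi x) = pi (lam A c x)).
  { intros c x. unfold Lbar. apply pi_lam. apply Hs. }
  pose (Phi := fun c => (Lbar c, Lbar (sb_inv A c))).
  assert (Phi_aut : forall c, is_aut_pair (@gmul Q) (Phi c)).
  { intro c. split; [|split]; simpl.
    - intros q r. rewrite <- (Hs q), <- (Hs r), <- Hhom, !LbarE, (lam_hom A c), Hhom.
      reflexivity.
    - intro q. rewrite <- (Hs q), !LbarE, lam_comp, (grp_invl _ _ _ _ GM), lam_one.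
      reflexivity.
    - intro q. rewrite <- (Hs q), !LbarE, lam_comp, (grp_invr _ _ _ _ GM), lam_one.
      reflexivity. }
  assert (Phi_mul : forall c d, Phi (sb_mul A c d) = aut_mul (Phi c) (Phi d)).
  { intros c d. unfold Phi, aut_mul; simpl. f_equal; apply functional_extensionality;
    intro q; rewrite <- (Hs q), !LbarE, lam_comp; try reflexivity.
    rewrite (g_inv_op _ _ _ GM). reflexivity. }
  assert (Phi_one : Phi (sb_one A) = aut_one).
  { unfold Phi, aut_one. rewrite (g_inv_e _ _ _ GM).
    f_equal; apply functional_extensionality;
    intro q; rewrite <- (Hs q), !LbarE, lam_one; reflexivity. }
  assert (Phi_inv : forall c, Phi (sb_inv A c) = aut_inv (Phi c)).
  { intro c. unfold Phi, aut_inv. simpl. rewrite (g_inv_inv _ _ _ GM). reflexivity. }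
  assert (Phi_weval : forall g w, Phi (weval (sb_mul A) (sb_inv A) (sb_one A) g w)
          = weval aut_mul aut_inv aut_one (fun n => Phi (g n)) w).
  { intros g w. induction w; simpl.
    - reflexivity.
    - exact Phi_one.
    - rewrite Phi_mul, IHw1, IHw2. reflexivity.
    - rewrite Phi_inv, IHw. reflexivity. }
  assert (Phi_verbal : forall x,
    in_verbal (@sb_mul A) (@sb_inv A) (@sb_one A) (fun _ => True) W x ->
    in_verbal aut_mul aut_inv aut_one (is_aut_pair (@gmul Q)) W (Phi x)).
  { intros x Hx. induction Hx.
    - rewrite Phi_weval. apply iv_value; auto.
    - rewrite Phi_one. apply iv_one.
    - rewrite Phi_mul. apply iv_mul; auto.
    - rewrite Phi_inv. apply iv_inv; auto. }
  assert (Hfix : forall x, pi (lam A a x) = pi x).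
  { intro x. rewrite <- LbarE. exact (Htriv (Phi a) (Phi_verbal a Ha) (pi x)). }
  split.
  - rewrite mul_as_add, !Hhom, Hfix. reflexivity.
  - pose proof (mul_as_add A a (sb_inv A a)) as H.
    rewrite (grp_invr _ _ _ _ GM), one_zero in H.
    apply (f_equal pi) in H. rewrite Hhom, Hfix, (hom_e _ _ _ _ _ _ GA GQ _ Hhom) in H.
    rewrite (hom_inv _ _ _ _ _ _ GA GQ _ Hhom).
    symmetry in H. apply (g_inv_unique _ _ _ GQ) in H. exact H.
Qed.
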